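(* Let $K$ be a field of any characteristic and let $I_A\subset K[x_1,\ldots,x_n]$ be a toric ideal of height $r\ge 2$. If $I_A$ is a set-theoretic complete intersection on binomials, then $I_A$ is radical splittable.
   Context: $A=\{{\bf a}_1,\ldots,{\bf a}_n\}\subset\mathbb{Z}^m$ is a vector configuration with $\ker_{\mathbb{Z}}(A)\cap\mathbb{N}^n=\{{\bf 0}\}$, where $\ker_{\mathbb{Z}}(A)=\{{\bf u}\in\mathbb{Z}^n\mid\sum u_i{\bf a}_i={\bf 0}\}$; $I_A$ is the kernel of $K[x_1,\ldots,x_n]\to K[t_1^{\pm1},\ldots,t_m^{\pm1}]$, $x_i\mapsto{\bf t}^{{\bf a}_i}$. The height of $I_A$ equals $\dim_{\mathbb{Q}}\ker_{\mathbb{Q}}(A)$. The binomial arithmetical rank $\mathrm{bar}(I_A)$ is the smallest $t$ such that there exist binomials $B_1,\ldots,B_t\in I_A$ with $I_A=\mathrm{rad}(B_1,\ldots,B_t)$; $I_A$ is a set-theoretic complete intersection on binomials if $\mathrm{bar}(I_A)=\mathrm{ht}(I_A)$. $I_A$ is radical splittable if there exist toric ideals $I_{A_1},I_{A_2}\subset K[x_1,\ldots,x_n]$ with $I_A=\mathrm{rad}(I_{A_1}+I_{A_2})$ and $I_{A_i}\ne I_A$ for $i=1,2$. *)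

(* Defs.v *)
From mathcomp Require Import all_boot all_algebra.
From mathcomp Require Import mpoly.
Set Implicit Arguments. Unset Strict Implicit. Unset Printing Implicit Defensive.
Import GRing.Theory.
Local Open Scope ring_scope.

(* A vector configuration A = {a_1,...,a_n} in Z^m is encoded as the integer
   matrix A : 'M[int]_(m, n) whose i-th column is a_i. *)

Definition Adeg (m n : nat) (A : 'M[int]_(m, n)) (u : 'X_{1..n}) : 'cV[int]_m :=
  \col_j \sum_(i < n) ((u i)%:Z * A j i).

Definition pointed_config (m n : nat) (A : 'M[int]_(m, n)) : Prop :=
  forall u : 'X_{1..n}, Adeg A u = 0 -> u = 0%MM.

(* The toric ideal I_A: kernel of K[x_1..x_n] -> K[t^{±1}], x_i |-> t^{a_i}.
   The image of f = sum_u c_u x^u is sum_u c_u t^{Au}; its coefficient at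
   t^w is the sum of the c_u with Au = w.  So f is in the kernel iff all
   these sums vanish. *)
Definition toric_ideal (K : fieldType) (m n : nat) (A : 'M[int]_(m, n))
  (f : {mpoly K[n]}) : Prop :=
  forall w : 'cV[int]_m, \sum_(u <- msupp f | Adeg A u == w) f@_u = 0.

(* height of I_A = dim_Q ker_Q(A) = n - rank_Q(A) *)
Definition toric_height (m n : nat) (A : 'M[int]_(m, n)) : nat :=
  (n - \rank (map_mx (fun z : int => z%:~R : rat) A))%N.

Definition is_binomial (K : fieldType) (n : nat) (B : {mpoly K[n]}) : Prop :=
  exists u v : 'X_{1..n}, B = 'X_[u] - 'X_[v].

Definition in_rad_gen (K : fieldType) (n t : nat) (B : 'I_t -> {mpoly K[n]})
  (f : {mpoly K[n]}) : Prop :=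
  exists (k : nat) (g : 'I_t -> {mpoly K[n]}), f ^+ k = \sum_(i < t) g i * B i.

Definition binomial_radical_gens (K : fieldType) (m n : nat) (A : 'M[int]_(m, n))
  (t : nat) (B : 'I_t -> {mpoly K[n]}) : Prop :=
  (forall i, is_binomial (B i) /\ toric_ideal A (B i)) /\
  (forall f, toric_ideal A f <-> in_rad_gen B f).

(* bar(I_A) = ht(I_A): ht(I_A) is attained, and it is the minimum. *)
Definition stci_on_binomials (K : fieldType) (m n : nat) (A : 'M[int]_(m, n)) : Prop :=
  (exists B : 'I_(toric_height A) -> {mpoly K[n]}, binomial_radical_gens A B) /\
  (forall (t : nat) (B : 'I_t -> {mpoly K[n]}),
      binomial_radical_gens A B -> (toric_height A <= t)%N).

Definition radical_splittable (K : fieldType) (m n : nat) (A : 'M[int]_(m, n)) : Prop :=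
  exists (m1 m2 : nat) (A1 : 'M[int]_(m1, n)) (A2 : 'M[int]_(m2, n)),
    pointed_config A1 /\ pointed_config A2 /\
    (forall f : {mpoly K[n]}, toric_ideal A f <->
       exists (k : nat) (g1 g2 : {mpoly K[n]}),
         toric_ideal A1 g1 /\ toric_ideal A2 g2 /\ f ^+ k = g1 + g2) /\
    ~ (forall f : {mpoly K[n]}, toric_ideal A1 f <-> toric_ideal A f) /\
    ~ (forall f : {mpoly K[n]}, toric_ideal A2 f <-> toric_ideal A f).

(* Main.v *)
Require Import Defs.
From mathcomp Require Import all_boot all_algebra.
From mathcomp Require Import mpoly.
From mathcomp Require Import order.
Set Implicit Arguments. Unset Strict Implicit. Unset Printing Implicit Defensive.
Import GRing.Theory Num.Theory.
Local Open Scope ring_scope.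

Section Phi.
Variables (K : fieldType) (m n : nat) (A : 'M[int]_(m, n)).

Definition phi (w : 'cV[int]_m) (p : {mpoly K[n]}) :=
  \sum_(u <- msupp p | Adeg A u == w) p@_u.

Lemma toricE (f : {mpoly K[n]}) : toric_ideal A f <-> forall w, phi w f = 0.
Proof. by []. Qed.

Lemma phi_seq w p (s : seq 'X_{1..n}) : uniq s -> {subset msupp p <= s} ->
  phi w p = \sum_(u <- s | Adeg A u == w) p@_u.
Proof.
move=> us sub; rewrite (bigID (fun u => u \in msupp p)) /=.
rewrite [X in _ + X]big1 ?addr0; last first.
  by move=> u /andP[_ /memN_msupp_eq0].
rewrite (eq_bigl (fun u => (u \in msupp p) && (Adeg A u == w))); last by move=> u; rewrite andbC.
rewrite -big_filter_cond /phi; apply: perm_big; rewrite perm_sym.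
apply: uniq_perm; rewrite ?filter_uniq ?msupp_uniq //.
move=> u; rewrite mem_filter; apply/andP/idP => [[]//|h]; split=> //; exact: sub.
Qed.

Lemma phiD w p q : phi w (p + q) = phi w p + phi w q.
Proof.
have sub1 : {subset msupp p <= undup (msupp p ++ msupp q)}.
  by move=> u h; rewrite mem_undup mem_cat h.
have sub2 : {subset msupp q <= undup (msupp p ++ msupp q)}.
  by move=> u h; rewrite mem_undup mem_cat h orbT.
have sub3 : {subset msupp (p + q) <= undup (msupp p ++ msupp q)}.
  by move=> u /msuppD_le h; rewrite mem_undup.
rewrite (phi_seq _ (undup_uniq _) sub1) (phi_seq _ (undup_uniq _) sub2).
rewrite (phi_seq _ (undup_uniq _) sub3) -big_split /=.
by apply: eq_bigr => u _; rewrite mcoeffD.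
Qed.

Lemma phiZ w c p : phi w (c *: p) = c * phi w p.
Proof.
rewrite (phi_seq _ (msupp_uniq p) (@msuppZ_le _ _ c p)) mulr_sumr.
by apply: eq_bigr => u _; rewrite mcoeffZ.
Qed.

Lemma phi0 w : phi w 0 = 0.
Proof. by rewrite /phi msupp0 big_nil. Qed.

Lemma phi_sum w (I : Type) (r : seq I) (P : pred I) (F : I -> {mpoly K[n]}) :
  phi w (\sum_(i <- r | P i) F i) = \sum_(i <- r | P i) phi w (F i).
Proof.
elim/big_rec2: _ => [|i x y _ <-]; by rewrite ?phi0 ?phiD.
Qed.

Lemma phiX w a : phi w 'X_[a] = (Adeg A a == w)%:R.
Proof.
rewrite /phi msuppX big_mkcond big_seq1 mcoeffX eqxx.
by case: eqP.
Qed.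

Lemma AdegD a b : Adeg A (a + b)%MM = Adeg A a + Adeg A b.
Proof.
apply/matrixP => i j; rewrite !mxE -big_split /=.
by apply: eq_bigr => k _; rewrite mnmDE PoszD mulrDl.
Qed.

Lemma phiMX w p e : phi w (p * 'X_[e]) = phi (w - Adeg A e) p.
Proof.
rewrite /phi (perm_big _ (msuppMX p e)) big_map.
apply: eq_big => [u|u _]; last by rewrite mcoeffMX.
rewrite AdegD; apply/eqP/eqP => [<-|->]; first by rewrite addrC addKr.
by rewrite addrC subrK.
Qed.

Lemma phiB w p q : phi w (p - q) = phi w p - phi w q.
Proof. by rewrite phiD -scaleN1r phiZ mulN1r. Qed.

Lemma toricD (f g : {mpoly K[n]}) : toric_ideal A f -> toric_ideal A g -> toric_ideal A (f + g).
Proof. by move=> hf hg w; rewrite -/(phi w _) phiD [phi _ f]hf [phi _ g]hg addr0. Qed.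

Lemma toric0 : toric_ideal A (0 : {mpoly K[n]}).
Proof. by move=> w; rewrite -/(phi w _) phi0. Qed.

Lemma toricM (h f : {mpoly K[n]}) : toric_ideal A f -> toric_ideal A (h * f).
Proof.
move=> hf w; rewrite -/(phi w _) mulrC {1}(mpolyE h) mulr_sumr phi_sum.
rewrite big1 // => u _; rewrite -scalerAr phiZ phiMX.
by rewrite [phi _ f]hf mulr0.
Qed.

Lemma toric_sum (I : Type) (r : seq I) (P : pred I) (F : I -> {mpoly K[n]}) :
  (forall i, P i -> toric_ideal A (F i)) -> toric_ideal A (\sum_(i <- r | P i) F i).
Proof.
move=> h; elim/big_rec: _ => [|i x Pi hx]; first exact: toric0.
by apply: toricD => //; apply: h.
Qed.

Lemma toric_binom a b :
  toric_ideal A ('X_[a] - 'X_[b] : {mpoly K[n]}) <-> Adeg A a = Adeg A b.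
Proof.
split => [h|e w]; last by rewrite -/(phi w _) phiB !phiX e subrr.
move: (h (Adeg A a)); rewrite -/(phi _ _) phiB !phiX eqxx.
by case: eqP => // _; rewrite subr0 => /eqP; rewrite oner_eq0.
Qed.

End Phi.

Definition colu n (u : 'X_{1..n}) : 'cV[int]_n := \col_i ((u i)%:Z).

Lemma AdegE m n (M : 'M[int]_(m, n)) u : Adeg M u = M *m colu u.
Proof. by apply/matrixP => i j; rewrite !mxE; apply: eq_bigr => k _; rewrite !mxE mulrC. Qed.

Lemma Adeg_col m k n (A : 'M[int]_(m, n)) (c : 'M[int]_(k, n)) u :
  Adeg (col_mx A c) u = col_mx (Adeg A u) (Adeg c u).
Proof. by rewrite !AdegE mul_col_mx. Qed.

Lemma col_mx_eqb (R : eqType) m1 m2 n (a a' : 'M[R]_(m1, n)) (b b' : 'M[R]_(m2, n)) :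
  (col_mx a b == col_mx a' b') = (a == a') && (b == b').
Proof.
by apply/eqP/andP => [/eq_col_mx [-> ->] //| [/eqP -> /eqP ->]].
Qed.

Lemma toric_sub (K : fieldType) m k n (A : 'M[int]_(m, n)) (c : 'M[int]_(k, n))
  (f : {mpoly K[n]}) : toric_ideal (col_mx A c) f -> toric_ideal A f.
Proof.
move=> h w; set S := msupp f; set Z := undup (map (Adeg c) S).
have -> : \sum_(u <- S | Adeg A u == w) f@_u =
          \sum_(u <- S | Adeg A u == w) \sum_(z <- Z) (if Adeg c u == z then f@_u else 0).
  rewrite big_seq_cond [RHS]big_seq_cond; apply: eq_bigr => u /andP[uS _].
  have zZ : Adeg c u \in Z by rewrite mem_undup; apply: map_f.
  rewrite (bigD1_seq _ zZ (undup_uniq _)) /= eqxx big1 ?addr0 //.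
  by move=> z; rewrite eq_sym => /negbTE ->.
rewrite exchange_big big1 // => z _.
rewrite -big_mkcondr /=.
rewrite -[RHS](h (col_mx w z)).
by apply: eq_bigl => u; rewrite Adeg_col col_mx_eqb.
Qed.

Notation QM M := (map_mx (fun z : int => z%:~R : rat) M).

Lemma trZ (R : comRingType) m n (a : R) (M : 'M[R]_(m, n)) : (a *: M)^T = a *: M^T.
Proof. by apply/matrixP => i j; rewrite !mxE. Qed.

Lemma QM_eq0 m n (M : 'M[int]_(m, n)) : (QM M == 0) = (M == 0).
Proof.
apply/eqP/eqP => [h|->]; last by apply/matrixP => i j; rewrite !mxE.
apply/matrixP => i j; have := congr1 (fun M : 'M[rat]_(m, n) => M i j) h; rewrite !mxE.
by move/eqP; rewrite intr_eq0 => /eqP.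
Qed.

Lemma QM_mul m n p (M : 'M[int]_(m, n)) (N : 'M[int]_(n, p)) : QM (M *m N) = QM M *m QM N.
Proof. exact: (map_mxM (intr : int -> rat)). Qed.

Lemma QM_tr m n (M : 'M[int]_(m, n)) : QM (M^T) = (QM M)^T.
Proof. by apply/matrixP => i j; rewrite !mxE. Qed.

Lemma scale_int n (y : 'rV[rat]_n) :
  exists (yz : 'rV[int]_n) (N : int), N != 0 /\ QM yz = N%:~R *: y.
Proof.
exists (\row_j (numq (y 0 j) * \prod_(k | k != j) denq (y 0 k))).
exists (\prod_k denq (y 0 k)); split.
  by rewrite prodf_seq_neq0; apply/allP => k _; rewrite denq_neq0.
apply/matrixP => i j; rewrite !mxE (ord1 i) intrM numqE.
by rewrite !(rmorph_prod (intr : int -> rat)) [X in _ = X * _](bigD1 j) //= -mulrA [LHS]mulrC.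
Qed.

Lemma sep m n p (A : 'M[int]_(m, n)) (D : 'M[int]_(p, n)) :
  (p < toric_height A)%N ->
  exists (c w : 'rV[int]_n), A *m w^T = 0 /\ D *m c^T = 0 /\ c *m w^T != 0.
Proof.
rewrite /toric_height => hp.
set AQ := QM A; set DQ := QM D.
set KA := kermx AQ^T.
have rKA : \rank KA = (n - \rank AQ)%N by rewrite mxrank_ker mxrank_tr.
have nsub : ~~ (KA <= DQ)%MS.
  apply/negP => /mxrankS; rewrite rKA => h.
  have := leq_trans h (rank_leq_row DQ); rewrite leqNgt hp //.
have /existsP [i hi] : [exists i, ~~ (row i KA <= DQ)%MS].
  rewrite -negb_forall; apply/negP => /forallP h; apply/negP: nsub.
  by rewrite negbK; apply/row_subP.
set wq := row i KA.
have hw : wq *m AQ^T = 0 by rewrite /wq -row_mul mulmx_ker row0.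
set KD := kermx DQ^T.
have hKD : DQ *m KD^T = 0 by rewrite -(trmxK DQ) -trmx_mul mulmx_ker trmx0.
have nz : wq *m KD^T != 0.
  apply/negP => /eqP h0.
  have s1 : (wq <= kermx KD^T)%MS by apply/sub_kermxP.
  have s2 : (DQ <= kermx KD^T)%MS by apply/sub_kermxP.
  have rk : \rank (kermx KD^T) = \rank DQ.
    by rewrite mxrank_ker mxrank_tr mxrank_ker mxrank_tr subKn // rank_leq_col.
  have s3 : (kermx KD^T <= DQ)%MS.
    by rewrite -(mxrank_leqif_sup s2).2 rk.
  by move: hi; rewrite (submx_trans s1 s3).
have /matrix0Pn [i0 [j hj]] := nz.
set cq := row j KD.
have hc : DQ *m cq^T = 0.
  have : cq *m DQ^T = 0 by apply/sub_kermxP; rewrite /cq /KD; apply: submx_trans (row_sub _ _) _.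
  by move=> h; rewrite -(trmxK DQ) -trmx_mul h trmx0.
have hwc : wq *m cq^T != 0.
  apply/matrix0Pn; exists i0; exists ord0; rewrite /cq tr_row.
  suff -> : (wq *m col j KD^T) i0 ord0 = (wq *m KD^T) i0 j by [].
  by rewrite !mxE; apply: eq_bigr => k _; rewrite !mxE.
have [wz [N1 [N1nz eN1]]] := scale_int wq.
have [cz [N2 [N2nz eN2]]] := scale_int cq.
exists cz, wz; split; [|split].
- have e : AQ *m wq^T = 0 by rewrite -(trmxK AQ) -trmx_mul hw trmx0.
  apply/eqP; rewrite -QM_eq0 QM_mul QM_tr eN1 trZ -scalemxAr -/AQ e scaler0 //.
- apply/eqP; rewrite -QM_eq0 QM_mul QM_tr eN2 trZ -scalemxAr -/DQ hc scaler0 //.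
- rewrite -QM_eq0 QM_mul QM_tr eN1 eN2 trZ -scalemxAr -scalemxAl.
  rewrite !scalemx_eq0 !intr_eq0 (negbTE N1nz) (negbTE N2nz) /=.
  apply/negP => /eqP h; move/negP: hwc; apply; apply/eqP.
  by rewrite -(trmxK wq) -trmx_mul h trmx0.
Qed.
Import Order.TTheory.

Lemma split_int n (wz : 'rV[int]_n) : exists a b : 'X_{1..n}, colu a - colu b = wz^T.
Proof.
exists [multinom (if (0 <= wz ord0 j)%R then absz (wz ord0 j) else 0%N) | j < n].
exists [multinom (if (0 <= wz ord0 j)%R then 0%N else absz (wz ord0 j)) | j < n].
apply/matrixP => i j; rewrite !mxE !mnmE.
rewrite (ord1 j); case: ifP => h; first by rewrite gez0_abs // subr0.
by rewrite ltz0_abs ?sub0r ?opprK // ltNge h.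
Qed.

Lemma sep_mon m n (A : 'M[int]_(m, n)) (c w : 'rV[int]_n) :
  A *m w^T = 0 -> c *m w^T != 0 ->
  exists a b : 'X_{1..n}, Adeg A a = Adeg A b /\ Adeg c a != Adeg c b.
Proof.
have [a [b e]] := split_int w.
move=> h1 h2; exists a, b; split.
  by apply/eqP; rewrite -subr_eq0 !AdegE -mulmxBr e h1.
by rewrite -subr_eq0 !AdegE -mulmxBr e.
Qed.

Lemma rowD p n (D : 'M[int]_(p, n)) (c : 'rV[int]_n) i (a b : 'X_{1..n}) :
  (forall j, D i j = (a j)%:Z - (b j)%:Z) -> D *m c^T = 0 -> Adeg c a = Adeg c b.
Proof.
move=> hD h; apply/eqP; rewrite -subr_eq0 !AdegE -mulmxBr; apply/eqP/matrixP => x y.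
rewrite (ord1 x) (ord1 y) !mxE.
have := congr1 (fun M : 'M[int]_(p, 1) => M i 0) h; rewrite !mxE => e.
rewrite -[RHS]e.
by apply: eq_bigr => j _; rewrite !mxE hD mulrC.
Qed.

Lemma pointed_col m k n (A : 'M[int]_(m, n)) (c : 'M[int]_(k, n)) :
  pointed_config A -> pointed_config (col_mx A c).
Proof.
move=> hA u; rewrite Adeg_col => /eqP; rewrite col_mx_eq0 => /andP[/eqP h _].
exact: hA.
Qed.

Lemma binom_col (K : fieldType) m k n (A : 'M[int]_(m, n)) (c : 'M[int]_(k, n)) a b :
  toric_ideal (col_mx A c) ('X_[a] - 'X_[b] : {mpoly K[n]}) <->
  Adeg A a = Adeg A b /\ Adeg c a = Adeg c b.
Proof.
rewrite toric_binom !Adeg_col; split; first exact: eq_col_mx.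
by case=> -> ->.
Qed.

Lemma not_eq_col (K : fieldType) m n (A : 'M[int]_(m, n)) (c w : 'rV[int]_n) :
  A *m w^T = 0 -> c *m w^T != 0 ->
  ~ (forall f : {mpoly K[n]}, toric_ideal (col_mx A c) f <-> toric_ideal A f).
Proof.
move=> h1 h2 H; have [a [b [e1 e2]]] := sep_mon h1 h2.
have := (H ('X_[a] - 'X_[b])).2; rewrite toric_binom => /(_ e1).
by move/binom_col => [_ e3]; move/eqP: e2.
Qed.

Lemma rad_closed (K : fieldType) m n (A : 'M[int]_(m, n)) t (B : 'I_t -> {mpoly K[n]}) :
  (forall f, toric_ideal A f <-> in_rad_gen B f) ->
  forall (f : {mpoly K[n]}) k, toric_ideal A (f ^+ k) -> toric_ideal A f.
Proof.
move=> hB f k /hB [j [g e]]; apply/hB; exists (k * j)%N, g.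
by rewrite exprM.
Qed.

Theorem proposition2p3 (K : fieldType) (m n : nat) (A : 'M[int]_(m, n)) :
  pointed_config A ->
  (2 <= toric_height A)%N ->
  stci_on_binomials K A ->
  radical_splittable K A.
Proof.
move=> hA h2 [[B [hBb hBr]] _].
move: B hBb hBr; set r := toric_height A => B hBb hBr.
have hex : forall i : 'I_r, exists uv : 'X_{1..n} * 'X_{1..n},
    B i = 'X_[uv.1] - 'X_[uv.2].
  by move=> i; have [[u [v e]] _] := hBb i; exists (u, v).
have [UV hUV] := fin_all_exists hex.
have hdeg : forall i, Adeg A (UV i).1 = Adeg A (UV i).2.
  by move=> i; have [_] := hBb i; rewrite hUV => /toric_binom.
have r0 : (0 < r)%N by apply: leq_trans h2.
have lr : (r.-1 < r)%N by rewrite ltn_predL.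
set last := Ordinal lr.
set D1 := \matrix_(i < r.-1, j < n)
  (((UV (widen_ord (leq_pred r) i)).1 j)%:Z - ((UV (widen_ord (leq_pred r) i)).2 j)%:Z).
set D2 := \matrix_(i < 1, j < n) (((UV last).1 j)%:Z - ((UV last).2 j)%:Z).
have [c1 [w1 [hw1 [hc1 nz1]]]] := sep D1 lr.
have [c2 [w2 [hw2 [hc2 nz2]]]] := sep D2 h2.
exists (m + 1)%N, (m + 1)%N, (col_mx A c1), (col_mx A c2).
split; first exact: pointed_col.
split; first exact: pointed_col.
split; last by split; [apply: (not_eq_col hw1 nz1) | apply: (not_eq_col hw2 nz2)].
move=> f; split.
  move/hBr => [k [g e]].
  exists k, (\sum_(i < r | i != last) g i * B i), (g last * B last).
  split; [|split]; last by rewrite e (bigD1 last) //= addrC.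
    apply: toric_sum => i hi; apply: toricM; rewrite hUV; apply/binom_col.
    split; first exact: hdeg.
    have hi' : (i < r.-1)%N.
      by rewrite ltn_neqAle -ltnS prednK // ltn_ord andbT; apply: contra hi => /eqP e'; apply/eqP/val_inj.
    have -> : i = widen_ord (leq_pred r) (Ordinal hi') by apply: val_inj.
    by apply: (rowD (D := D1) (i := Ordinal hi')) => // j; rewrite mxE.
  apply: toricM; rewrite hUV; apply/binom_col.
  split; first exact: hdeg.
  by apply: (rowD (D := D2) (i := ord0)) => // j; rewrite mxE.
move=> [k [g1 [g2 [t1 [t2 e]]]]].
apply: (rad_closed hBr (k := k)); rewrite e.
by apply: toricD; [apply: toric_sub t1 | apply: toric_sub t2].
Qed.
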